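(* Let $\mathcal V$ be a descent category, $T$ a finite simplicial set, $S\subset T$ a simplicial subset, and $f:X\to Y$ a hypercover of simplicial spaces. Then the induced morphism $\mathrm{Map}(T,X)\to\mathrm{Map}(S\hookrightarrow T,f)$ is a cover.
   Context: A descent category is a small category $\mathcal V$ with a subcategory of morphisms called covers such that: $\mathcal V$ has finite limits; pullbacks of covers are covers; if $f$ and $g\circ f$ are covers then $g$ is a cover. A simplicial space is a simplicial object in $\mathcal V$. A finite simplicial set has finitely many nondegenerate simplices; $\mathrm{Map}(T,X)$ is the finite limit representing simplicial maps $T\to X$; $\mathrm{Map}(S\hookrightarrow T,f)=\mathrm{Map}(S,X)\times_{\mathrm{Map}(S,Y)}\mathrm{Map}(T,Y)$. A morphism $f:X\to Y$ is a hypercover if $X_n\to\mathrm{Map}(\partial\Delta^n\hookrightarrow\Delta^n,f)$ is a cover for all $n\ge0$. *)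

(* Defs.v *)
From Stdlib Require List.
From mathcomp Require Import all_boot.
Set Implicit Arguments. Unset Strict Implicit. Unset Printing Implicit Defensive.

Record category := Category {
  ob : Type;
  hom : ob -> ob -> Type;
  cid : forall A, hom A A;
  ccomp : forall A B D, hom B D -> hom A B -> hom A D;
  ccomp_id_l : forall A B (f : hom A B), ccomp (cid B) f = f;
  ccomp_id_r : forall A B (f : hom A B), ccomp f (cid A) = f;
  ccomp_assoc : forall A B D E (h : hom D E) (g : hom B D) (f : hom A B),
      ccomp h (ccomp g f) = ccomp (ccomp h g) f
}.
Arguments hom {c}. Arguments cid {c}. Arguments ccomp {c A B D}.

Section CatDefs.
Variable C : category.

Definition is_terminal (Tm : ob C) : Prop :=
  forall A : ob C, exists! u : hom A Tm, True.

Definition is_pullback (A B D : ob C) (f : hom A D) (g : hom B D)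
    (P : ob C) (p1 : hom P A) (p2 : hom P B) : Prop :=
  ccomp f p1 = ccomp g p2 /\
  forall (Q : ob C) (q1 : hom Q A) (q2 : hom Q B), ccomp f q1 = ccomp g q2 ->
    exists! u : hom Q P, ccomp p1 u = q1 /\ ccomp p2 u = q2.

Definition has_finite_limits : Prop :=
  (exists Tm : ob C, is_terminal Tm) /\
  (forall (A B D : ob C) (f : hom A D) (g : hom B D),
     exists (P : ob C) (p1 : hom P A) (p2 : hom P B), is_pullback f g p1 p2).

Definition descent_category (cover : forall A B : ob C, hom A B -> Prop) : Prop :=
  has_finite_limits /\
  (forall A, cover A A (cid A)) /\
  (forall A B D (f : hom A B) (g : hom B D),
      cover _ _ f -> cover _ _ g -> cover _ _ (ccomp g f)) /\
  (forall (A B D : ob C) (f : hom A D) (g : hom B D) (P : ob C)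
          (p1 : hom P A) (p2 : hom P B),
      is_pullback f g p1 p2 -> cover _ _ g -> cover _ _ p1) /\
  (forall A B D (f : hom A B) (g : hom B D),
      cover _ _ f -> cover _ _ (ccomp g f) -> cover _ _ g).
End CatDefs.

Definition monob m n (f : {ffun 'I_m.+1 -> 'I_n.+1}) : bool :=
  [forall i : 'I_m.+1, forall j : 'I_m.+1, (i <= j) ==> (f i <= f j)].
Definition Delta (m n : nat) := {f : {ffun 'I_m.+1 -> 'I_n.+1} | monob f}.

Lemma monob_id n : monob [ffun i : 'I_n.+1 => i].
Proof. by apply/forallP=> i; apply/forallP=> j; rewrite !ffunE; apply/implyP. Qed.
Definition did n : Delta n n := exist (fun f => is_true (monob f)) _ (monob_id n).

Lemma monob_comp m n p (g : Delta n p) (f : Delta m n) :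
  monob [ffun i => sval g (sval f i)].
Proof.
case: g f => g /forallP hg [f /forallP hf] /=.
apply/forallP=> i; apply/forallP=> j; apply/implyP=> hij; rewrite !ffunE.
move: (hf i) => /forallP /(_ j) /implyP /(_ hij) hfij.
by move: (hg (f i)) => /forallP /(_ (f j)) /implyP /(_ hfij).
Qed.
Definition dcomp m n p (g : Delta n p) (f : Delta m n) : Delta m p :=
  exist (fun f => is_true (monob f)) _ (monob_comp g f).

Definition surjb m n (t : Delta m n) : bool :=
  [forall j : 'I_n.+1, [exists i : 'I_m.+1, sval t i == j]].

Record sset := SSet {
  sx : nat -> Type;
  sact : forall m n, Delta m n -> sx n -> sx m;
  sact_id : forall n (x : sx n), sact (did n) x = x;
  sact_comp : forall m n p (g : Delta n p) (f : Delta m n) (x : sx p),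
      sact (dcomp g f) x = sact f (sact g x)
}.
Arguments sact s {m n}.

Definition nondegenerate (T : sset) n (x : sx T n) : Prop :=
  ~ exists m (t : Delta n m) (y : sx T m), (m < n) /\ surjb t /\ x = sact T t y.

Definition finite_sset (T : sset) : Prop :=
  exists l : seq {n : nat & sx T n},
    forall n (x : sx T n), nondegenerate x -> List.In (existT _ n x) l.

Definition sub_sset (T : sset) (S : forall n, sx T n -> Prop) : Prop :=
  forall m n (t : Delta m n) (x : sx T n), S n x -> S m (sact T t x).

Definition allS (T : sset) : forall n, sx T n -> Prop := fun _ _ => True.
Arguments allS : clear implicits.

Lemma dcomp_id_r m n (s : Delta m n) : dcomp s (did m) = s.
Proof. by apply: val_inj; apply/ffunP=> i; rewrite /= !ffunE. Qed.
Lemma dcomp_assoc m n p q (s : Delta p q) (g : Delta n p) (f : Delta m n) :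
  dcomp s (dcomp g f) = dcomp (dcomp s g) f.
Proof. by apply: val_inj; apply/ffunP=> i; rewrite /= !ffunE. Qed.

Definition DeltaS (n : nat) : sset :=
  @SSet (fun m => Delta m n) (fun m k t s => dcomp s t)
        (fun k s => dcomp_id_r s) (fun m k p g f s => dcomp_assoc s g f).

Definition boundary (n : nat) : forall m, sx (DeltaS n) m -> Prop :=
  fun m (s : Delta m n) => ~~ surjb s.
Arguments boundary : clear implicits.

Record sobj (C : category) := SObj {
  sob : nat -> ob C;
  sobact : forall m n, Delta m n -> hom (sob n) (sob m);
  sobact_id : forall n, sobact (did n) = cid (sob n);
  sobact_comp : forall m n p (g : Delta n p) (f : Delta m n),
      sobact (dcomp g f) = ccomp (sobact f) (sobact g)
}.
Arguments sob {C}. Arguments sobact {C} s {m n}.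

Record smorph (C : category) (X Y : sobj C) := SMorph {
  smap : forall n, hom (sob X n) (sob Y n);
  smap_nat : forall m n (t : Delta m n),
      ccomp (smap m) (sobact X t) = ccomp (sobact Y t) (smap n)
}.
Arguments smap {C X Y} s n.

Definition spred (T : sset) := forall n, sx T n -> Prop.

Section Cones.
Local Unset Implicit Arguments.
Variables (C : category) (T : sset) (P : spred T) (X : sobj C).

Definition cone (U : ob C) := forall n (x : sx T n), P n x -> hom U (sob X n).

(* compatibility = it is a simplicial map P -> Hom(U, X_.) *)
Definition cone_compat (U : ob C) (a : cone U) : Prop :=
  forall m n (t : Delta m n) (x : sx T n) (hx : P n x) (hy : P m (sact T t x)),
    ccomp (sobact X t) (a n x hx) = a m (sact T t x) hy.
End Cones.
Arguments cone {C T} P X U.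
Arguments cone_compat {C T P X U} a.

(* (M, c) is Map(T, X): it represents simplicial maps T -> X *)
Definition is_Map (C : category) (T : sset) (X : sobj C) (M : ob C)
    (c : cone (allS T) X M) : Prop :=
  cone_compat c /\
  forall (U : ob C) (a : cone (allS T) X U), cone_compat a ->
    exists! h : hom U M, forall n x hx, ccomp (c n x hx) h = a n x hx.

Definition rel_compat (C : category) (T : sset) (S : forall n, sx T n -> Prop)
    (X Y : sobj C) (f : smorph X Y) (U : ob C)
    (a : cone S X U) (b : cone (allS T) Y U) : Prop :=
  forall n x (hs : S n x) (ht : allS T n x), ccomp (smap f n) (a n x hs) = b n x ht.

(* (M, a, b) is Map(S -> T, f) = Map(S,X) x_{Map(S,Y)} Map(T,Y) *)
Definition is_MapRel (C : category) (T : sset) (S : forall n, sx T n -> Prop)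
    (X Y : sobj C) (f : smorph X Y) (M : ob C)
    (a : cone S X M) (b : cone (allS T) Y M) : Prop :=
  cone_compat a /\ cone_compat b /\ rel_compat f a b /\
  forall (U : ob C) (a' : cone S X U) (b' : cone (allS T) Y U),
    cone_compat a' -> cone_compat b' -> rel_compat f a' b' ->
    exists! h : hom U M,
      (forall n x hs, ccomp (a n x hs) h = a' n x hs) /\
      (forall n x ht, ccomp (b n x ht) h = b' n x ht).

(* hypercover: X_n -> Map(bd Delta^n -> Delta^n, f) is a cover for all n
   (X_n identified with Map(Delta^n, X) via Yoneda: sigma |-> X(sigma)) *)
Definition hypercover (C : category) (cover : forall A B : ob C, hom A B -> Prop)
    (X Y : sobj C) (f : smorph X Y) : Prop :=
  forall n (M : ob C) (a : cone (boundary n) X M) (b : cone (allS (DeltaS n)) Y M),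
    is_MapRel f a b ->
    forall phi : hom (sob X n) M,
      (forall m (s : Delta m n) hs, ccomp (a m s hs) phi = sobact X s) ->
      (forall m (s : Delta m n) ht, ccomp (b m s ht) phi = ccomp (sobact Y s) (smap f n)) ->
      cover _ _ phi.

(* Main.v *)
Require Import Defs.
From mathcomp Require Import all_boot zify.
From Stdlib Require Import Classical FunctionalExtensionality PropExtensionality ProofIrrelevance ClassicalEpsilon.
Set Implicit Arguments. Unset Strict Implicit. Unset Printing Implicit Defensive.

Lemma monoP m n (t : Delta m n) (i j : 'I_m.+1) : i <= j -> sval t i <= sval t j.
Proof.
case: t => t /= /forallP H hij.
by move: (H i) => /forallP /(_ j) /implyP /(_ hij).
Qed.

Lemma monob_mk m n (f : 'I_m.+1 -> 'I_n.+1) :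
  (forall i j : 'I_m.+1, i <= j -> f i <= f j) -> monob [ffun i => f i].
Proof.
move=> H; apply/forallP=> i; apply/forallP=> j; apply/implyP=> hij.
by rewrite !ffunE; apply: H.
Qed.

Definition mkD m n (f : 'I_m.+1 -> 'I_n.+1) (H : forall i j : 'I_m.+1, i <= j -> f i <= f j)
  : Delta m n := exist (fun g => is_true (monob g)) _ (monob_mk H).

Lemma mkDE m n f H i : sval (@mkD m n f H) i = f i.
Proof. by rewrite /= ffunE. Qed.

Lemma Delta_eq m n (s t : Delta m n) : (forall i, sval s i = sval t i) -> s = t.
Proof. by move=> H; apply: val_inj; apply/ffunP. Qed.

Lemma dcompE m n p (g : Delta n p) (f : Delta m n) i : sval (dcomp g f) i = sval g (sval f i).
Proof. by rewrite /= ffunE. Qed.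

Lemma didE n i : sval (did n) i = i.
Proof. by rewrite /= ffunE. Qed.

Lemma dcomp_id_l m n (s : Delta m n) : dcomp (did n) s = s.
Proof. by apply: Delta_eq=> i; rewrite dcompE didE. Qed.

Lemma surjP m n (t : Delta m n) : surjb t -> forall j, exists i, sval t i = j.
Proof. by move=> /forallP H j; case/existsP: (H j) => i /eqP; exists i. Qed.

Lemma surjbP m n (t : Delta m n) : (forall j, exists i, sval t i = j) -> surjb t.
Proof. by move=> H; apply/forallP=> j; case: (H j)=> i hi; apply/existsP; exists i; apply/eqP. Qed.

Lemma surjb_id n : surjb (did n).
Proof. by apply: surjbP=> j; exists j; rewrite didE. Qed.

Lemma surjb_comp m n p (g : Delta n p) (f : Delta m n) : surjb g -> surjb f -> surjb (dcomp g f).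
Proof.
move=> /surjP hg /surjP hf; apply: surjbP=> j.
case: (hg j)=> k hk; case: (hf k)=> i hi; exists i; by rewrite dcompE hi.
Qed.

Lemma surjb_comp_l m n p (g : Delta n p) (f : Delta m n) : surjb (dcomp g f) -> surjb g.
Proof.
move=> /surjP h; apply: surjbP=> j; case: (h j)=> i hi; exists (sval f i); by rewrite -dcompE.
Qed.

(* any section of a monotone map is monotone *)
Lemma section_ex m n (t : Delta m n) (Ht : surjb t) (i : 'I_m.+1) :
  exists d : Delta n m, dcomp t d = did n /\ sval d (sval t i) = i.
Proof.
pose g (j : 'I_n.+1) : 'I_m.+1 :=
  if j == sval t i then i else odflt i [pick k | sval t k == j].
have Hg j : sval t (g j) = j.
  rewrite /g; case: eqP=> [->//|_].
  case: pickP=> [k /eqP //|H]; case: (surjP Ht j)=> k hk.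
  by move: (H k); rewrite hk eqxx.
have Hm (j1 j2 : 'I_n.+1) : j1 <= j2 -> g j1 <= g j2.
  move=> h12; rewrite leqNgt; apply/negP=> hlt.
  have := monoP t (ltnW hlt); rewrite !Hg => h21.
  have e : j1 = j2 by apply: val_inj; apply/eqP; rewrite eqn_leq h12 h21.
  by move: hlt; rewrite e ltnn.
exists (mkD Hm); split.
  by apply: Delta_eq=> j; rewrite dcompE mkDE Hg didE.
by rewrite mkDE /g eqxx.
Qed.

Lemma nat_strict_id n (g : nat -> nat) :
  (forall i j, i < j <= n -> g i < g j) -> (forall i, i <= n -> g i <= n) ->
  forall i, i <= n -> g i = i.
Proof.
move=> Hs Hb.
have ge : forall i, i <= n -> i <= g i.
  elim=> [//|i IH] hi.
  have := Hs i i.+1; rewrite leqnn hi => /(_ isT) h.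
  have := IH (ltnW hi); lia.
have le : forall j, j <= n -> g (n - j) <= n - j.
  elim=> [_|j IH hj]; first by rewrite subn0; apply: Hb.
  have := Hs (n - j.+1) (n - j); have := IH (ltnW hj).
  have -> : (n - j.+1 < n - j <= n) = true by apply/andP; split; lia.
  move=> h1 /(_ isT) h2; lia.
move=> i hi; apply/eqP; rewrite eqn_leq ge // andbT.
have := le (n - i); rewrite subKn //; apply; exact: leq_subr.
Qed.

Lemma mono_surj_id n (t : Delta n n) : surjb t -> t = did n.
Proof.
move=> Ht.
have inj : injective (fun i => sval t i).
  have H : {in predT &, injective (fun i => sval t i)}.
    apply/image_injP; rewrite eqn_leq leq_image_card /=.
    apply/subset_leq_card/subsetP=> j _; case: (surjP Ht j)=> k hk.
    by apply/imageP; exists k.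
  by move=> x y; apply: H.
pose g (i : nat) : nat := sval t (inord i).
have Hs : forall i j, i < j <= n -> g i < g j.
  move=> i j /andP[hij hj]; rewrite /g ltn_neqAle monoP; last first.
    by rewrite !inordK; lia.
  rewrite andbT; apply/negP=> /eqP /val_inj /inj /(congr1 val).
  rewrite /= !inordK; try lia.
have Hb : forall i, i <= n -> g i <= n by move=> i _; rewrite /g -ltnS.
apply: Delta_eq=> i; rewrite didE; apply: val_inj=> /=.
have := nat_strict_id Hs Hb (ltn_ord i); rewrite /g inord_val //.
Qed.

Lemma noninj_factor k n (r : Delta k n) (i j : 'I_k.+1) :
  i != j -> sval r i = sval r j ->
  exists k' (sg : Delta k k') (r' : Delta k' n), k' < k /\ surjb sg /\ r = dcomp r' sg.
Proof.
wlog lt : i j / i < j.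
  move=> W hne e; case: (ltngtP i j)=> h; first exact: W h hne e.
  - by apply: (W j i)=> //; rewrite eq_sym.
  - by move: hne; rewrite (val_inj h) eqxx.
move=> _ e.
have [p [hp ep]] : exists p : nat, p < k /\ sval r (inord p) = sval r (inord p.+1).
  exists i; split; first by apply: leq_trans lt _; rewrite -ltnS.
  apply: val_inj; apply/eqP; rewrite eqn_leq monoP; last by rewrite !inordK //; apply: leq_ltn_trans lt _.
  rewrite /= inord_val e; apply: monoP; have := ltn_ord j; move=> hj; rewrite inordK; lia.
case: k r i j lt e p hp ep => [|k] r i j lt e p hp ep; first by [].
pose sgf (a : 'I_k.+2) : 'I_k.+1 := inord (if a <= p then nat_of_ord a else (nat_of_ord a).-1).
have sgm : forall a b : 'I_k.+2, a <= b -> sgf a <= sgf b.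
  move=> a b hab; rewrite /sgf !inordK; try (case: ifP=> ?; have:= ltn_ord a; have := ltn_ord b; lia).
  case: ifP; case: ifP; lia.
pose rf (a : 'I_k.+1) : 'I_n.+1 := sval r (inord (if a <= p then nat_of_ord a else (nat_of_ord a).+1)).
have rm : forall a0 b0 : 'I_k.+1, a0 <= b0 -> rf a0 <= rf b0.
  move=> a0 b0 hab; rewrite /rf; apply: monoP; 
  rewrite !inordK; try (case: ifP=> ?; have:= ltn_ord a0; have := ltn_ord b0; lia).
  case: ifP; case: ifP; lia.
exists k, (mkD sgm), (mkD rm); split=> //; split.
  apply: surjbP=> b; exists (inord (if b <= p then nat_of_ord b else (nat_of_ord b).+1)).
  apply: val_inj; rewrite mkDE /sgf inordK; last (case: ifP=> ?; have:= ltn_ord b; lia).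
  case: (leqP b p)=> h /=.
    by rewrite h inordK //; lia.
  rewrite ifF; last lia.
  rewrite inordK //; lia.
apply: Delta_eq=> a; rewrite dcompE !mkDE /rf /sgf inordK; last (case: ifP=> ?; have:= ltn_ord a; lia).
case: (ltngtP a p)=> h.
- by rewrite ifT ?ifT ?inord_val //; lia.
- case: (leqP a.-1 p)=> h2.
    have e1 : inord a.-1 = inord p :> 'I_k.+2 by apply: val_inj; rewrite /= !inordK; lia.
    have e2 : a = inord p.+1 :> 'I_k.+2 by apply: val_inj; rewrite /= inordK; lia.
    by rewrite e1 ep -e2.
  by rewrite prednK ?inord_val //; lia.
- by rewrite ifT ?inord_val //; lia.
Qed.

Section Simp.
Variable T : sset.

Lemma nondeg_dim k n (r : Delta k n) (x : sx T n) :
  nondegenerate (sact T r x) -> ~~ surjb r -> k < n.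
Proof.
move=> nd ns; rewrite ltnNge; apply/negP=> hnk.
case: (boolP (injectiveb (fun i => sval r i))) => [/injectiveP inj | /injectivePn].
  move/negP: ns; apply; apply: surjbP=> j.
  have := inj_card_onto inj; rewrite !card_ord ltnS => /(_ hnk j) /codomP [i ->].
  by exists i.
move=> [i [j hij e]].
have [k' [sg [r' [lt [su E]]]]] := noninj_factor hij e.
apply: nd; exists k', sg, (sact T r' x); split=> //; split=> //.
by rewrite E sact_comp.
Qed.

Lemma EZ n (z : sx T n) :
  exists m (t : Delta n m) (y : sx T m), surjb t /\ nondegenerate y /\ z = sact T t y.
Proof.
elim/ltn_ind: n z => n IH z.
case: (classic (nondegenerate z)) => nd.
  exists n, (did n), z; split; first exact: surjb_id.
  by split=> //; rewrite sact_id.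
move/NNPP: nd => [m [t [y [lt [su ->]]]]].
have [m' [t' [y' [su' [nd' ->]]]]] := IH m lt y.
exists m', (dcomp t' t), y'; split; first exact: surjb_comp.
by split=> //; rewrite sact_comp.
Qed.

Lemma cmin (R : nat -> Prop) : (exists n, R n) -> exists n, R n /\ forall m, R m -> n <= m.
Proof.
move=> [n Hn]; elim/ltn_ind: n Hn => n IH Hn.
case: (classic (exists m, R m /\ m < n)) => [[m [Hm lt]]|H].
  exact: IH m lt Hm.
exists n; split=> // m Hm; rewrite leqNgt; apply/negP=> lt; apply: H; by exists m.
Qed.

Definition subP (P Q : forall n, sx T n -> Prop) := forall n z, P n z -> Q n z.

Definition attach (P : forall n, sx T n -> Prop) n (x : sx T n) : forall m, sx T m -> Prop :=
  fun m z => P m z \/ exists t : Delta m n, z = sact T t x.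

Lemma surj_back (P : forall n, sx T n -> Prop) (HP : sub_sset P) m n (t : Delta m n) (y : sx T n) :
  surjb t -> P m (sact T t y) -> P n y.
Proof.
move=> su hp; have [d [hd _]] := section_ex su ord0.
have := HP _ _ d _ hp; by rewrite -sact_comp hd sact_id.
Qed.

Lemma pick_min (P Q : forall n, sx T n -> Prop) (HP : sub_sset P) (HQ : sub_sset Q) :
  (exists n (z : sx T n), Q n z /\ ~ P n z) ->
  exists n (x : sx T n), Q n x /\ ~ P n x /\ nondegenerate x /\
    (forall m (s : Delta m n), ~~ surjb s -> P m (sact T s x)).
Proof.
move=> [n0 [z0 [q0 np0]]].
pose R d := exists x : sx T d, Q d x /\ ~ P d x /\ nondegenerate x.
have : exists d, R d.
  have [m [t [y [su [nd e]]]]] := EZ z0.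
  exists m, y; split; last split=> //.
    have [d [hd _]] := section_ex su ord0.
    have := HQ _ _ d _ q0; by rewrite e -sact_comp hd sact_id.
  by move=> py; apply: np0; rewrite e; apply: HP.
move/cmin=> [d [[x [qx [npx ndx]]] mn]].
exists d, x; split=> //; split=> //; split=> // m s ns.
apply: NNPP=> nps.
have [k [t [y [su [nd e]]]]] := EZ (sact T s x).
have [dl [hd _]] := section_ex su ord0.
have ey : y = sact T (dcomp s dl) x by rewrite sact_comp e -sact_comp hd sact_id.
have nsd : ~~ surjb (dcomp s dl) by apply: contra ns; exact: surjb_comp_l.
have lt : k < d by apply: (nondeg_dim (r := dcomp s dl) (x := x)) => //; rewrite -ey.
have : d <= k.
  apply: mn; exists y; split; first by rewrite ey; apply: HQ.
  split=> //; move=> py; apply: nps; rewrite e; exact: HP.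
by rewrite leqNgt lt.
Qed.

Lemma sub_attach (P : forall n, sx T n -> Prop) (HP : sub_sset P) n (x : sx T n) :
  sub_sset (attach P x).
Proof.
move=> m k t z [pz|[r ->]]; first by left; apply: HP.
by right; exists (dcomp r t); rewrite sact_comp.
Qed.

Lemma chain (l : seq {n : nat & sx T n}) (Q : forall n, sx T n -> Prop) (HQ : sub_sset Q)
  (Hl : forall n (z : sx T n), Q n z -> nondegenerate z -> List.In (existT _ n z) l)
  (S : forall n, sx T n -> Prop) (HS : sub_sset S) (HSQ : subP S Q)
  (Phi : (forall n, sx T n -> Prop) -> Prop) (base : Phi S)
  (step : forall (P : forall n, sx T n -> Prop) n (x : sx T n), sub_sset P -> subP S P -> subP P Q ->
     Q n x -> nondegenerate x -> ~ P n x ->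
     (forall m (s : Delta m n), ~~ surjb s -> P m (sact T s x)) -> Phi P -> Phi (attach P x)) :
  Phi Q.
Proof.
suff: forall k (P : forall n, sx T n -> Prop), sub_sset P -> subP S P -> subP P Q -> Phi P ->
   (exists l' : seq {n : nat & sx T n}, size l' <= k /\
      forall n z, List.In (existT _ n z) l -> Q n z -> ~ P n z -> List.In (existT _ n z) l') ->
   Phi Q.
  move/(_ (size l) S HS (fun _ _ h => h) HSQ base); apply; exists l; split=> //.
elim=> [|k IH] P HP HSP HPQ PhiP [l' [sz Hl']].
all: case: (classic (exists n (z : sx T n), Q n z /\ ~ P n z)) => [ex|nex]; last first.
1,3: suff -> : Q = P by [];
     apply: functional_extensionality_dep=> n; apply: functional_extensionality=> z;
     apply: propositional_extensionality; split; [|exact: HPQ];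
     move=> qz; apply: NNPP=> npz; apply: nex; by exists n, z.
all: have [n [x [qx [npx [ndx fx]]]]] := pick_min HP HQ ex.
all: have := Hl' n x (Hl _ _ qx ndx) qx npx.
  by case: l' sz {Hl'}.
move=> Hin; have [l1 [l2 el]] := List.in_split _ _ Hin.
apply: (IH (attach P x)).
- exact: sub_attach.
- by move=> m z /HSP; left.
- by move=> m z [/HPQ //|[t ->]]; apply: HQ.
- exact: step.
exists (l1 ++ l2); split.
  by move: sz; rewrite el !size_cat /=; lia.
move=> m z inz qz npz.
have := Hl' m z inz qz (fun h => npz (or_introl h)).
rewrite el => Hin'; case: (List.in_app_or _ _ _ Hin') => [h|[h|h]];
  apply: List.in_or_app; try by [left|right].
exfalso; apply: npz.
suff : forall p q : {n : nat & sx T n}, p = q -> @attach P n x (projT1 p) (projT2 p) -> @attach P n x (projT1 q) (projT2 q).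
  move=> W; apply: (W _ _ h) => /=; right; exists (did n); by rewrite sact_id.
by move=> p q ->.
Qed.
End Simp.

Lemma sig_eq A (P : A -> Prop) (x y : {a | P a}) : sval x = sval y -> x = y.
Proof. case: x y => [a pa] [b pb] /= e; subst b; f_equal; apply: proof_irrelevance. Qed.

Section Psh.
Variable C : category.
Variable cover : forall A B : ob C, hom A B -> Prop.
Hypothesis HC : descent_category cover.

Record psh := Psh {
  pt : ob C -> Type;
  pres : forall U V : ob C, hom V U -> pt U -> pt V;
  pres_id : forall U p, pres (cid U) p = p;
  pres_comp : forall U V W (g : hom V U) (h : hom W V) p, pres (ccomp g h) p = pres h (pres g p)
}.
Arguments pres p {U V} _ _ : rename.
Arguments pt : clear implicits.

Definition prepr (F : psh) (M : ob C) (e : pt F M) :=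
  forall U (p : pt F U), exists! h : hom U M, pres F h e = p.
Definition representable (F : psh) := exists M e, @prepr F M e.
Definition natural (F G : psh) (eta : forall U, pt F U -> pt G U) :=
  forall U V (h : hom V U) p, eta V (pres F h p) = pres G h (eta U p).
Definition covermap (F G : psh) (eta : forall U, pt F U -> pt G U) :=
  forall M e N e' (h : hom M N), @prepr F M e -> @prepr G N e' -> pres G h e' = eta M e -> cover h.

Lemma cover_id A : cover (cid A).
Proof. by case: HC => _ [H _]. Qed.
Lemma cover_comp A B D (f : hom A B) (g : hom B D) : cover f -> cover g -> cover (ccomp g f).
Proof. by case: HC => _ [_ [H _]]; apply: H. Qed.
Lemma cover_pb (A B D : ob C) (f : hom A D) (g : hom B D) (P : ob C) (p1 : hom P A) (p2 : hom P B) :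
  is_pullback f g p1 p2 -> cover g -> cover p1.
Proof. by case: HC => _ [_ [_ [H _]]]; apply: H. Qed.

Lemma iso_cover A B (i : hom A B) (k : hom B A) :
  ccomp i k = cid B -> ccomp k i = cid A -> cover i.
Proof.
move=> ik ki; apply: (@cover_pb _ _ _ (cid B) (cid B) _ i i); last exact: cover_id.
split=> // Q q1 q2; rewrite !ccomp_id_l => e; subst q2.
exists (ccomp k q1); split.
  by rewrite ccomp_assoc ik ccomp_id_l.
move=> u [e _]; by rewrite -e ccomp_assoc ki ccomp_id_l.
Qed.

Lemma repr_uniq F M e U (h h' : hom U M) (R : @prepr F M e) : pres F h e = pres F h' e -> h = h'.
Proof.
move=> E; case: (R U (pres F h' e)) => u [_ U'].
by rewrite -(U' h E) -(U' h' erefl).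
Qed.

Lemma repr_ex F M e U (p : pt F U) : @prepr F M e -> exists h : hom U M, pres F h e = p.
Proof. by move=> R; case: (R U p) => h [H _]; exists h. Qed.

Lemma repr_iso_cover F M e M' e' (i : hom M' M) :
  @prepr F M e -> @prepr F M' e' -> pres F i e = e' -> cover i.
Proof.
move=> R R' E.
have [k Ek] := repr_ex e R'.
apply: (iso_cover (k := k)).
  by apply: (repr_uniq R); rewrite pres_comp E Ek pres_id.
by apply: (repr_uniq R'); rewrite pres_comp Ek E pres_id.
Qed.

Lemma covermap_one F G eta M e N e' (h : hom M N) :
  natural eta -> @prepr F M e -> @prepr G N e' -> pres G h e' = eta M e -> cover h ->
  @covermap F G eta.
Proof.
move=> nat R R' E ch M1 e1 N1 e1' h1 R1 R1' E1.
have [i Ei] := repr_ex e1 R.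
have [j Ej] := repr_ex e' R1'.
have -> : h1 = ccomp j (ccomp h i).
  apply: (repr_uniq R1'); rewrite E1 !pres_comp Ej E -nat Ei //.
apply: cover_comp; last exact: (repr_iso_cover R1' R').
apply: cover_comp=> //; exact: (repr_iso_cover R R1).
Qed.

Lemma repr_nat_iso F G (eta : forall U, pt F U -> pt G U) (eps : forall U, pt G U -> pt F U) M e :
  natural eta -> (forall U p, eps U (eta U p) = p) -> (forall U q, eta U (eps U q) = q) ->
  @prepr F M e -> @prepr G M (eta M e).
Proof.
move=> nat K1 K2 R U q.
case: (R U (eps U q)) => h [Eh Uh]; exists h; split.
  by rewrite -nat Eh K2.
move=> h' E'; apply: Uh; by rewrite -(K1 _ (pres F h' e)) nat E'.
Qed.

Lemma covermap_iso F G (eta : forall U, pt F U -> pt G U) (eps : forall U, pt G U -> pt F U) :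
  natural eta -> (forall U p, eps U (eta U p) = p) -> (forall U q, eta U (eps U q) = q) ->
  representable F -> @covermap F G eta.
Proof.
move=> nat K1 K2 [M [e R]].
apply: (@covermap_one _ _ _ M e M (eta M e) (cid M)) => //.
- exact: (repr_nat_iso nat K1 K2).
- by rewrite pres_id.
- exact: cover_id.
Qed.

Lemma representable_iso F G (eta : forall U, pt F U -> pt G U) (eps : forall U, pt G U -> pt F U) :
  natural eta -> (forall U p, eps U (eta U p) = p) -> (forall U q, eta U (eps U q) = q) ->
  representable F -> representable G.
Proof. move=> nat K1 K2 [M [e R]]; exists M, (eta M e); exact: repr_nat_iso. Qed.

Lemma covermap_comp F G H (eta : forall U, pt F U -> pt G U) (theta : forall U, pt G U -> pt H U) :
  natural eta -> natural theta -> representable F -> representable G -> representable H ->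
  covermap eta -> covermap theta -> @covermap F H (fun U p => theta U (eta U p)).
Proof.
move=> n1 n2 [M [e R]] [N [e' R']] [K [e'' R'']] c1 c2.
have [h1 E1] := repr_ex (eta M e) R'.
have [h2 E2] := repr_ex (theta N e') R''.
apply: (@covermap_one _ _ _ M e K e'' (ccomp h2 h1)) => //.
- by move=> U V h p; rewrite n1 n2.
- by rewrite pres_comp E2 -n2 E1.
- apply: cover_comp; [exact: c1 E1 | exact: c2 E2].
Qed.

Lemma covermap_ext F G (eta eta' : forall U, pt F U -> pt G U) :
  (forall U p, eta U p = eta' U p) -> @covermap F G eta -> @covermap F G eta'.
Proof. by move=> E c M e N e' h R R' E'; apply: c R R' _; rewrite E'. Qed.

Section PB.
Local Unset Implicit Arguments.
Variables (F G H : psh) (eta : forall U, pt F U -> pt H U) (theta : forall U, pt G U -> pt H U).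
Hypotheses (n1 : natural eta) (n2 : natural theta).

Definition PBpt U := {pq : pt F U * pt G U | eta U pq.1 = theta U pq.2}.
Definition PBres U V (h : hom V U) (x : PBpt U) : PBpt V.
Proof.
exists (pres F h (sval x).1, pres G h (sval x).2).
by rewrite /= n1 n2 (svalP x).
Defined.
Lemma PBres_id U p : PBres U U (cid U) p = p.
Proof. by apply: sig_eq; rewrite /= !pres_id; case: (sval p). Qed.
Lemma PBres_comp U V W (g : hom V U) (h : hom W V) p : PBres U W (ccomp g h) p = PBres V W h (PBres U V g p).
Proof. by apply: sig_eq; rewrite /= !pres_comp. Qed.
Definition PB : psh := Psh PBres_id PBres_comp.

Definition PBproj2 U (x : pt PB U) : pt G U := (sval x).2.

Lemma PB_thm : representable F -> representable G -> representable H ->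
  representable PB /\ (covermap eta -> covermap PBproj2).
Proof.
move=> [A [eA RA]] [B [eB RB]] [D [eD RD]].
have [fA EA] := repr_ex (eta A eA) RD.
have [gB EB] := repr_ex (theta B eB) RD.
case: HC => [[_ pbs] _].
have [P [p1 [p2 [Hc Hu]]]] := pbs _ _ _ gB fA.
have ee : eta P (pres F p2 eA) = theta P (pres G p1 eB).
  by rewrite n1 n2 -EA -EB -!pres_comp Hc.
pose e : pt PB P := exist _ (pres F p2 eA, pres G p1 eB) ee.
have R : prepr e.
  move=> U [[p q] /= epq].
  have [hp Ep] := repr_ex p RA; have [hq Eq] := repr_ex q RB.
  have Ehh : ccomp gB hq = ccomp fA hp.
    by apply: (repr_uniq RD); rewrite !pres_comp EA EB -n1 -n2 Ep Eq.
  case: (Hu U hq hp Ehh) => u [[u1 u2] Uu]; exists u; split.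
    by apply: sig_eq; rewrite /= -!pres_comp u1 u2 Ep Eq.
  move=> u' E'; apply: Uu; move: E' => /(congr1 sval) /= [E1 E2]; split.
    by apply: (repr_uniq RB); rewrite pres_comp E2 Eq.
  by apply: (repr_uniq RA); rewrite pres_comp E1 Ep.
split; first by exists P, e.
move=> ce; apply: (@covermap_one _ _ _ P e B eB p1) => //.
apply: (@cover_pb _ _ _ gB fA P p1 p2) => //.
exact: ce EA.
Qed.
End PB.

Definition yo (A : ob C) : psh.
Proof.
refine (@Psh (fun U => hom U A) (fun U V h g => ccomp g h) _ _).
- by move=> U p; rewrite ccomp_id_r.
- by move=> U V W g h p; rewrite ccomp_assoc.
Defined.

Lemma yo_repr A : @prepr (yo A) A (cid A).
Proof.
move=> U p; exists p; split; first by rewrite /= ccomp_id_l.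
by move=> h; rewrite /= ccomp_id_l.
Qed.
End Psh.

Lemma nat_inv C (F G : psh C) (eta : forall U, pt F U -> pt G U) (eps : forall U, pt G U -> pt F U) :
  natural eta -> (forall U p, eps U (eta U p) = p) -> (forall U q, eta U (eps U q) = q) ->
  natural eps.
Proof. move=> n K1 K2 U V h q; by rewrite -{1}(K2 U q) -n K1. Qed.

Lemma PBproj2_nat C F G H eta theta n1 n2 : natural (@PBproj2 C F G H eta theta n1 n2).
Proof. by []. Qed.

Section Cones.
Variables (C : category) (T : sset).

Lemma cone_eq (P : forall n, sx T n -> Prop) (X : sobj C) U (a a' : cone P X U) :
  (forall n x hx, a n x hx = a' n x hx) -> a = a'.
Proof.
move=> H; apply: functional_extensionality_dep=> n.
apply: functional_extensionality_dep=> x; apply: functional_extensionality_dep=> hx; exact: H.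
Qed.

Lemma a_congr (P : forall n, sx T n -> Prop) (X : sobj C) U (a : cone P X U) m (z z' : sx T m) hz hz' :
  z = z' -> a m z hz = a m z' hz'.
Proof. move=> e; subst z'; f_equal; apply: proof_irrelevance. Qed.

Definition ccone (P : forall n, sx T n -> Prop) (X : sobj C) U := {a : cone P X U | cone_compat a}.

Definition cres (P : forall n, sx T n -> Prop) (X : sobj C) U V (h : hom V U) (a : ccone P X U) : ccone P X V.
Proof.
exists (fun n x hx => ccomp (sval a n x hx) h).
move=> m k t z hz hy /=; by rewrite ccomp_assoc (svalP a _ _ t z hz hy).
Defined.

Definition ConeP (P : forall n, sx T n -> Prop) (X : sobj C) : psh C.
Proof.
refine (@Psh C (ccone P X) (@cres P X) _ _).
- by move=> U a; apply: sig_eq; apply: cone_eq=> n x hx /=; rewrite ccomp_id_r.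
- by move=> U V W g h a; apply: sig_eq; apply: cone_eq=> n x hx /=; rewrite ccomp_assoc.
Defined.

Definition rpt (S : forall n, sx T n -> Prop) (X Y : sobj C) (f : smorph X Y) U :=
  {ab : cone S X U * cone (allS T) Y U | cone_compat ab.1 /\ cone_compat ab.2 /\ rel_compat f ab.1 ab.2}.

Definition rres (S : forall n, sx T n -> Prop) (X Y : sobj C) (f : smorph X Y) U V (h : hom V U)
  (ab : rpt S f U) : rpt S f V.
Proof.
exists ((fun n x hx => ccomp ((sval ab).1 n x hx) h), (fun n x hx => ccomp ((sval ab).2 n x hx) h)).
case: ab => [[a b] /= [ca [cb rab]]]; split; last split.
- by move=> m k t z hz hy /=; rewrite ccomp_assoc (ca _ _ t z hz hy).
- by move=> m k t z hz hy /=; rewrite ccomp_assoc (cb _ _ t z hz hy).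
- by move=> n x hs ht /=; rewrite ccomp_assoc (rab n x hs ht).
Defined.

Definition RelP (S : forall n, sx T n -> Prop) (X Y : sobj C) (f : smorph X Y) : psh C.
Proof.
refine (@Psh C (rpt S f) (@rres S X Y f) _ _).
- move=> U [[a b] H]; apply: sig_eq=> /=; congr pair; apply: cone_eq=> n x hx /=; by rewrite ccomp_id_r.
- move=> U V W g h [[a b] H]; apply: sig_eq=> /=; congr pair; apply: cone_eq=> n x hx /=; by rewrite ccomp_assoc.
Defined.

Lemma MapRel_repr (S : forall n, sx T n -> Prop) (X Y : sobj C) (f : smorph X Y) M a b
  (H : is_MapRel f a b) :
  @prepr C (RelP S f) M (exist _ (a, b) (conj (proj1 H) (conj (proj1 (proj2 H)) (proj1 (proj2 (proj2 H)))))).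
Proof.
case: H => [ca [cb [rab U]]] V [[a' b'] /= [ca' [cb' rab']]].
case: (U V a' b' ca' cb' rab') => h [[h1 h2] Uh]; exists h; split.
  by apply: sig_eq=> /=; congr pair; apply: cone_eq.
move=> h' /(congr1 sval) /= [e1 e2]; apply: Uh; split=> n x hx; by rewrite -?e1 -?e2.
Qed.

Lemma repr_MapRel (S : forall n, sx T n -> Prop) (X Y : sobj C) (f : smorph X Y) M (e : rpt S f M) :
  @prepr C (RelP S f) M e -> is_MapRel f (sval e).1 (sval e).2.
Proof.
case: e => [[a b] [ca [cb rab]]] /= R; split=> //; split=> //; split=> // U a' b' ca' cb' rab'.
case: (R U (exist _ (a', b') (conj ca' (conj cb' rab')))) => h [E Uh].
exists h; split.
  by move: E => /(congr1 sval) /= [e1 e2]; split=> n x hx; rewrite -?e1 -?e2.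
move=> h' [h1 h2]; apply: Uh; apply: sig_eq=> /=; congr pair; apply: cone_eq=> n x hx /=; by rewrite ?h1 ?h2.
Qed.

Lemma Map_repr (X : sobj C) M c (H : is_Map c) : @prepr C (ConeP (allS T) X) M (exist _ c (proj1 H)).
Proof.
case: H => cc U V [a ca].
case: (U V a ca) => h [Eh Uh]; exists h; split.
  by apply: sig_eq; apply: cone_eq.
by move=> h' /(congr1 sval) /= E; apply: Uh=> n x hx; rewrite -E.
Qed.

End Cones.

Section Attach.
Local Unset Implicit Arguments.
Variables (C : category) (T : sset).
Local Set Implicit Arguments.
Local Unset Implicit Arguments.
Variables (P : forall n, sx T n -> Prop) (HP : sub_sset P) (n : nat) (x : sx T n).
Local Set Implicit Arguments.
Local Unset Implicit Arguments.
Hypothesis npx : ~ P n x.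
Local Set Implicit Arguments.
Local Unset Implicit Arguments.
Hypothesis fx : forall m (s : Delta m n), ~~ surjb s -> P m (sact T s x).
Local Set Implicit Arguments.

Lemma uniq_rep m (t t' : Delta m n) : sact T t x = sact T t' x -> ~ P m (sact T t x) -> t = t'.
Proof.
move=> e np.
have st : surjb t by apply: contraT=> ns; case: np; exact: fx.
have st' : surjb t' by apply: contraT=> ns; case: np; rewrite e; exact: fx.
apply: Delta_eq=> i.
have [d [hd di]] := section_ex st i.
have ex : x = sact T (dcomp t' d) x by rewrite sact_comp -e -sact_comp hd sact_id.
have sr : surjb (dcomp t' d).
  by apply: contraT=> ns; case: npx; rewrite ex; exact: fx.
have E := mono_surj_id sr.
have := dcompE t' d (sval t i); rewrite E didE di => ->; done.
Qed.

Lemma exP m (z : sx T m) : attach P x z -> ~ P m z -> exists t : Delta m n, z = sact T t x.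
Proof. by case. Qed.

Definition pickt m (z : sx T m) (H : exists t : Delta m n, z = sact T t x) : Delta m n :=
  proj1_sig (constructive_indefinite_description _ H).
Lemma pickt_spec m (z : sx T m) H : z = sact T (@pickt m z H) x.
Proof. exact: (proj2_sig (constructive_indefinite_description _ H)). Qed.

Local Unset Implicit Arguments.
Variable X : sobj C.
Local Set Implicit Arguments.

Definition ext U (a : cone P X U) (u : hom U (sob X n)) : cone (attach P x) X U :=
  fun m z hz => match excluded_middle_informative (P m z) with
   | left p => a m z p
   | right np => ccomp (sobact X (pickt (exP hz np))) u
   end.

Lemma ext_P U a u m (z : sx T m) (hz : attach P x z) (p : P m z) : @ext U a u m z hz = a m z p.
Proof.
rewrite /ext; case: excluded_middle_informative=> [p'|//].
by f_equal; apply: proof_irrelevance.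
Qed.

Section ExtVal.
Local Unset Implicit Arguments.
Variables (U : ob C) (a : cone P X U) (u : hom U (sob X n)).
Local Set Implicit Arguments.
Local Unset Implicit Arguments.
Hypothesis ca : cone_compat a.
Local Set Implicit Arguments.
Local Unset Implicit Arguments.
Hypothesis Hu : forall m (s : Delta m n) (hs : ~~ surjb s), ccomp (sobact X s) u = a m (sact T s x) (fx _ _ hs).
Local Set Implicit Arguments.

Lemma ext_val m (z : sx T m) (t : Delta m n) (hz : attach P x z) : z = sact T t x -> ext a u hz = ccomp (sobact X t) u.
Proof.
move=> ez; rewrite /ext; case: excluded_middle_informative=> [p|np].
  case: (boolP (surjb t)) => [st|ns].
    by case: npx; apply: (surj_back HP st); rewrite -ez.
  by rewrite (Hu _ _ ns); apply: a_congr.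
have e := pickt_spec (exP hz np).
by rewrite (@uniq_rep _ _ _ (etrans (esym e) ez)) //; rewrite -e.
Qed.

Lemma ext_compat : cone_compat (ext a u).
Proof.
move=> k m r z hz hy.
case: (classic (P m z)) => [p|np].
  have p' : P k (sact T r z) by apply: HP.
  by rewrite (ext_P a u hz p) (ext_P a u hy p') (ca _ _ r z p p').
have [t et] := exP hz np.
rewrite (ext_val (t := t)) // (ext_val (t := dcomp t r)); last by rewrite sact_comp et.
by rewrite sobact_comp ccomp_assoc.
Qed.
End ExtVal.

Definition bd U (a : cone P X U) : cone (boundary n) X U :=
  fun m s hs => a m (sact T s x) (fx _ _ hs).

Lemma bd_compat U (a : cone P X U) : cone_compat a -> cone_compat (bd a).
Proof.
move=> ca k m r s hs hy; rewrite /bd (ca _ _ r _ _ (HP _ _ r _ (fx _ _ hs))).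
by apply: a_congr; rewrite /= sact_comp.
Qed.

Definition ybd U (u : hom U (sob X n)) : cone (boundary n) X U :=
  fun m s hs => ccomp (sobact X s) u.

Lemma ybd_compat U (u : hom U (sob X n)) : cone_compat (ybd u).
Proof. by move=> k m r s hs hy; rewrite /ybd /= ccomp_assoc sobact_comp. Qed.

Definition yall U (u : hom U (sob X n)) : cone (allS (DeltaS n)) X U :=
  fun m s hs => ccomp (sobact X s) u.

Lemma yall_compat U (u : hom U (sob X n)) : cone_compat (yall u).
Proof. by move=> k m r s hs hy; rewrite /yall /= ccomp_assoc sobact_comp. Qed.

Definition restr U (a : cone (attach P x) X U) : cone P X U :=
  fun m z hz => a m z (or_introl hz).

Lemma restr_compat U (a : cone (attach P x) X U) : cone_compat a -> cone_compat (restr a).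
Proof. by move=> ca k m r z hz hy; exact: ca. Qed.

Lemma xin : attach P x x.
Proof. by right; exists (did n); rewrite sact_id. Qed.

End Attach.

Section AttIso.
Local Unset Implicit Arguments.
Variables (C : category) (cover : forall A B : ob C, hom A B -> Prop).
Hypothesis HC : descent_category cover.
Variables (T : sset) (P : forall n, sx T n -> Prop) (HP : sub_sset P) (n : nat) (x : sx T n).
Hypothesis npx : ~ P n x.
Hypothesis fx : forall m (s : Delta m n), ~~ surjb s -> P m (sact T s x).
Variable X : sobj C.
Local Set Implicit Arguments.

Definition eta1 U (u : pt (yo (sob X n)) U) : pt (ConeP (boundary n) X) U :=
  exist _ (ybd u) (ybd_compat u).
Definition theta1 U (a : pt (ConeP P X) U) : pt (ConeP (boundary n) X) U :=
  exist _ (bd fx (sval a)) (bd_compat HP fx (svalP a)).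

Lemma eta1_nat : natural eta1.
Proof.
move=> U V h u; apply: sig_eq; apply: cone_eq=> m s hs /=; by rewrite /ybd ccomp_assoc.
Qed.
Lemma theta1_nat : natural theta1.
Proof. by move=> U V h u; apply: sig_eq; apply: cone_eq=> m s hs. Qed.

Definition PB1 := PB C _ _ _ _ _ eta1_nat theta1_nat.

Lemma fwd1_eq U (a : pt (ConeP (attach P x) X) U) :
  eta1 (sval a n x (xin P x)) = theta1 (exist _ (restr (sval a)) (restr_compat (svalP a))).
Proof.
apply: sig_eq; apply: cone_eq=> m s hs /=; rewrite /ybd /bd /restr.
exact: (svalP a).
Qed.

Definition fwd1 U (a : pt (ConeP (attach P x) X) U) : pt PB1 U :=
  exist _ (sval a n x (xin P x), exist _ (restr (sval a)) (restr_compat (svalP a))) (fwd1_eq a).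

Lemma Hu_of U (u : hom U (sob X n)) (a : cone P X U) :
  ybd u = bd fx a -> forall m (s : Delta m n) (hs : ~~ surjb s),
  ccomp (sobact X s) u = a m (sact T s x) (fx m s hs).
Proof. by move=> E m s hs; have := f_equal (fun c => c m s hs) E. Qed.

Definition bwd1 U (q : pt PB1 U) : pt (ConeP (attach P x) X) U :=
  exist _ (ext (sval (sval q).2) (sval q).1)
    (ext_compat HP npx (svalP (sval q).2) (Hu_of (f_equal sval (svalP q)))).

Lemma fwd1_nat : natural fwd1.
Proof.
move=> U V h a; apply: sig_eq=> /=; congr pair.
by apply: sig_eq.
Qed.

Lemma K1_1 U (a : pt (ConeP (attach P x) X) U) : bwd1 (fwd1 a) = a.
Proof.
apply: sig_eq; apply: cone_eq=> m z hz /=.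
case: (classic (P m z)) => [p|np].
  by rewrite (ext_P _ _ hz p); rewrite /restr; apply: a_congr.
have [t et] := exP hz np.
rewrite (ext_val HP npx (Hu_of (f_equal sval (svalP (fwd1 a)))) hz et) /=.
rewrite ((svalP a) _ _ t x (xin P x) (eq_rect_r _ hz (esym et))).
by apply: a_congr.
Qed.

Lemma K2_1 U (q : pt PB1 U) : fwd1 (bwd1 q) = q.
Proof.
case: q => [[u [a ca]] E]; apply: sig_eq=> /=; congr pair.
  rewrite (ext_val HP npx (Hu_of (f_equal sval E)) (xin P x) (esym (sact_id x))).
  by rewrite sobact_id ccomp_id_l.
apply: sig_eq; apply: cone_eq=> m z hz /=; by rewrite /restr (ext_P _ _ _ hz).
Qed.

Lemma attach_cone_repr : representable (ConeP P X) -> representable (ConeP (boundary n) X) ->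
  representable (ConeP (attach P x) X).
Proof.
move=> R1 R2.
have [R _] := PB_thm _ _ HC _ _ _ _ _ eta1_nat theta1_nat (ex_intro _ _ (ex_intro _ _ (@yo_repr C (sob X n)))) R1 R2.
apply: (representable_iso (eta := bwd1) (eps := fwd1)) => //.
- exact: (nat_inv fwd1_nat K1_1 K2_1).
- exact: K2_1.
- exact: K1_1.
Qed.

Variables (Y : sobj C) (f : smorph X Y).

Definition bdall U (b : cone (allS T) Y U) : cone (allS (DeltaS n)) Y U :=
  fun m s _ => b m (sact T s x) I.
Lemma bdall_compat U (b : cone (allS T) Y U) : cone_compat b -> cone_compat (bdall b).
Proof.
move=> cb k m r s hs hy; rewrite /bdall (cb _ _ r _ I I).
by apply: a_congr; rewrite /= sact_comp.
Qed.

Lemma eta2_prop U (u : hom U (sob X n)) :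
  cone_compat (ybd u) /\ cone_compat (yall (X := Y) (ccomp (smap f n) u)) /\
  rel_compat f (ybd u) (yall (X := Y) (ccomp (smap f n) u)).
Proof.
split; first exact: ybd_compat. split; first exact: yall_compat.
by move=> m s hs ht; rewrite /ybd /yall ccomp_assoc smap_nat -ccomp_assoc.
Qed.
Definition eta2 U (u : pt (yo (sob X n)) U) : pt (RelP (boundary n) f) U :=
  exist _ (ybd u, yall (X := Y) (ccomp (smap f n) u)) (eta2_prop u).

Lemma theta2_prop U (ab : pt (RelP P f) U) :
  cone_compat (bd fx (sval ab).1) /\ cone_compat (bdall (sval ab).2) /\
  rel_compat f (bd fx (sval ab).1) (bdall (sval ab).2).
Proof.
case: ab => [[a b] [ca [cb rab]]] /=.
split; first exact: bd_compat. split; first exact: bdall_compat.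
by move=> m s hs ht; exact: rab.
Qed.
Definition theta2 U (ab : pt (RelP P f) U) : pt (RelP (boundary n) f) U :=
  exist _ (bd fx (sval ab).1, bdall (sval ab).2) (theta2_prop ab).

Lemma eta2_nat : natural eta2.
Proof.
move=> U V h u; apply: sig_eq=> /=; congr pair; apply: cone_eq=> m s hs /=;
  by rewrite /ybd /yall !ccomp_assoc.
Qed.
Lemma theta2_nat : natural theta2.
Proof. by move=> U V h u; apply: sig_eq. Qed.

Definition PB2 := PB C _ _ _ _ _ eta2_nat theta2_nat.

Lemma rrestr_prop U (ab : pt (RelP (attach P x) f) U) :
  cone_compat (restr (sval ab).1) /\ cone_compat (sval ab).2 /\ rel_compat f (restr (sval ab).1) (sval ab).2.
Proof.
case: ab => [[a b] [ca [cb rab]]] /=.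
split; first exact: restr_compat. split=> //.
by move=> m z hz ht; rewrite /restr rab.
Qed.
Definition rrestr U (ab : pt (RelP (attach P x) f) U) : pt (RelP P f) U :=
  exist _ (restr (sval ab).1, (sval ab).2) (rrestr_prop ab).

Lemma rrestr_nat : natural rrestr.
Proof. by move=> U V h u; apply: sig_eq. Qed.

Lemma fwd2_eq U (ab : pt (RelP (attach P x) f) U) :
  eta2 ((sval ab).1 n x (xin P x)) = theta2 (rrestr ab).
Proof.
case: ab => [[a b] [ca [cb rab]]]; apply: sig_eq=> /=; congr pair; apply: cone_eq=> m s hs /=.
  by rewrite /ybd /bd /restr; apply: ca.
rewrite /yall /bdall /=.
have := rab n x (xin P x) I; rewrite /= => ->.
exact: cb.
Qed.

Definition fwd2 U (ab : pt (RelP (attach P x) f) U) : pt PB2 U :=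
  exist _ ((sval ab).1 n x (xin P x), rrestr ab) (fwd2_eq ab).

Lemma bwd2_prop U (q : pt PB2 U) :
  cone_compat (ext (x := x) (sval (sval q).2).1 (sval q).1) /\ cone_compat (sval (sval q).2).2 /\
  rel_compat f (ext (x := x) (sval (sval q).2).1 (sval q).1) (sval (sval q).2).2.
Proof.
case: q => [[u [[a b] [ca [cb rab]]]] /= E].
have E1 := f_equal (fun w => (sval w).1) E; have E2 := f_equal (fun w => (sval w).2) E.
simpl in E1, E2.
have Hu := Hu_of E1.
split; first exact: (ext_compat HP npx ca Hu).
split=> // m z hz ht.
case: (classic (P m z)) => [p|np].
  by rewrite (ext_P _ _ hz p) rab.
have [t et] := exP hz np.
rewrite (ext_val HP npx Hu hz et) ccomp_assoc smap_nat -ccomp_assoc.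
have := f_equal (fun c => c m t I) E2; rewrite /yall /bdall /= => ->.
by apply: a_congr.
Qed.

Definition bwd2 U (q : pt PB2 U) : pt (RelP (attach P x) f) U :=
  exist _ (ext (x := x) (sval (sval q).2).1 (sval q).1, (sval (sval q).2).2) (bwd2_prop q).

Lemma fwd2_nat : natural fwd2.
Proof.
move=> U V h a; apply: sig_eq=> /=; congr pair.
by apply: sig_eq.
Qed.

Lemma K1_2 U (ab : pt (RelP (attach P x) f) U) : bwd2 (fwd2 ab) = ab.
Proof.
have Hu := Hu_of (f_equal (fun w => (sval w).1) (svalP (fwd2 ab))).
move: Hu; case: ab => [[a b] [ca [cb rab]]] /= Hu.
apply: sig_eq=> /=; congr pair.
apply: cone_eq=> m z hz /=.
case: (classic (P m z)) => [p|np].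
  by rewrite (ext_P _ _ hz p); rewrite /restr; apply: a_congr.
have [t et] := exP hz np.
rewrite (ext_val HP npx Hu hz et).
rewrite (ca _ _ t x (xin P x) (eq_rect_r _ hz (esym et))).
by apply: a_congr.
Qed.

Lemma K2_2 U (q : pt PB2 U) : fwd2 (bwd2 q) = q.
Proof.
case: q => [[u [[a b] [ca [cb rab]]]] E]; apply: sig_eq=> /=; congr pair.
  have E1 := f_equal (fun w => (sval w).1) E; simpl in E1.
  rewrite (ext_val HP npx (Hu_of E1) (xin P x) (esym (sact_id x))).
  by rewrite sobact_id ccomp_id_l.
apply: sig_eq=> /=; congr pair; apply: cone_eq=> m z hz /=; by rewrite /restr (ext_P _ _ _ hz).
Qed.

Lemma attach_rel : representable (RelP P f) -> representable (RelP (boundary n) f) ->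
  covermap cover eta2 ->
  representable (RelP (attach P x) f) /\ covermap cover rrestr.
Proof.
move=> R1 R2 ce.
have Ryo : representable (yo (sob X n)) by exists (sob X n), (cid _); exact: (@yo_repr C (sob X n)).
have [R cp] := PB_thm _ _ HC _ _ _ _ _ eta2_nat theta2_nat Ryo R1 R2.
have nb := nat_inv fwd2_nat K1_2 K2_2.
have R' : representable (RelP (attach P x) f).
  by apply: (representable_iso (eta := bwd2) (eps := fwd2)) => //; [exact: K2_2 | exact: K1_2].
split=> //.
apply: (covermap_ext (eta := fun U p => PBproj2 _ _ _ _ _ _ _ _ U (fwd2 p))) => //.
apply: (covermap_comp HC fwd2_nat (@PBproj2_nat _ _ _ _ _ _ eta2_nat theta2_nat)) => //.
- exact: (covermap_iso HC fwd2_nat K1_2 K2_2).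
- exact: cp ce.
Qed.
End AttIso.

Section Final.
Local Unset Implicit Arguments.
Variables (C : category) (cover : forall A B : ob C, hom A B -> Prop).
Hypothesis HC : descent_category cover.
Local Set Implicit Arguments.

Lemma empty_repr (T : sset) (X : sobj C) : representable (ConeP (T := T) (fun _ _ => False) X).
Proof.
have [[[Tm0 HTm] _] _] := HC.
have ce : @cone_compat C T (fun _ _ => False) X Tm0 (fun n x (hx : False) => match hx return hom Tm0 (sob X n) with end).
  by move=> m k t z [].
exists Tm0, (exist _ _ ce) => U p.
case: (HTm U) => u [_ Uu]; exists u; split.
  by apply: sig_eq; apply: cone_eq=> n x [].
by move=> h _; apply: Uu.
Qed.

Section Yon.
Variables (n : nat) (Y : sobj C).
Definition yfun U (u : pt (yo (sob Y n)) U) : pt (ConeP (T := DeltaS n) (allS (DeltaS n)) Y) U :=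
  exist _ (yall u) (yall_compat u).
Definition yinv U (a : pt (ConeP (T := DeltaS n) (allS (DeltaS n)) Y) U) : pt (yo (sob Y n)) U :=
  sval a n (did n) I.
Lemma yfun_nat : natural yfun.
Proof. by move=> U V h u; apply: sig_eq; apply: cone_eq=> m s hs /=; rewrite /yall ccomp_assoc. Qed.
Lemma yK1 U u : @yinv U (yfun u) = u.
Proof. by rewrite /yinv /= /yall sobact_id ccomp_id_l. Qed.
Lemma yK2 U a : yfun (@yinv U a) = a.
Proof.
apply: sig_eq; apply: cone_eq=> m s hs /=; rewrite /yall /yinv (svalP a _ _ s (did n) I I).
by apply: a_congr; rewrite /= dcomp_id_l.
Qed.
Lemma simplex_repr : representable (ConeP (T := DeltaS n) (allS (DeltaS n)) Y).
Proof.
apply: (representable_iso (eta := yfun) (eps := yinv)).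
- exact: yfun_nat.
- exact: yK1.
- exact: yK2.
- by exists (sob Y n), (cid _); exact: (@yo_repr C (sob Y n)).
Qed.
End Yon.

Section RelRepr.
Variables (T : sset) (S : forall n, sx T n -> Prop) (X Y : sobj C) (f : smorph X Y).

Definition fcone U (a : pt (ConeP S X) U) : pt (ConeP S Y) U.
Proof.
exists (fun n x hx => ccomp (smap f n) (sval a n x hx)).
move=> m k t z hz hy /=; rewrite ccomp_assoc -smap_nat -ccomp_assoc.
by rewrite (svalP a _ _ t z hz hy).
Defined.
Definition scone U (b : pt (ConeP (allS T) Y) U) : pt (ConeP S Y) U.
Proof.
exists (fun n x hx => sval b n x I).
move=> m k t z hz hy /=; exact: (svalP b).
Defined.
Lemma fcone_nat : natural fcone.
Proof. by move=> U V h a; apply: sig_eq; apply: cone_eq=> m z hz /=; rewrite ccomp_assoc. Qed.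
Lemma scone_nat : natural scone.
Proof. by move=> U V h a; apply: sig_eq; apply: cone_eq. Qed.

Definition PBR := PB C _ _ _ _ _ fcone_nat scone_nat.

Definition rbwd U (q : pt PBR U) : pt (RelP S f) U.
Proof.
exists (sval (sval q).1, sval (sval q).2).
split; first exact: (svalP (sval q).1).
split; first exact: (svalP (sval q).2).
move=> n x hs ht; have := f_equal (fun c => sval c n x hs) (svalP q) => /= ->.
by case: ht.
Defined.
Definition rfwd U (ab : pt (RelP S f) U) : pt PBR U.
Proof.
exists (exist _ (sval ab).1 (proj1 (svalP ab)), exist _ (sval ab).2 (proj1 (proj2 (svalP ab)))).
apply: sig_eq; apply: cone_eq=> n x hs /=; exact: (proj2 (proj2 (svalP ab))).
Defined.
Lemma rbwd_nat : natural rbwd.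
Proof. by move=> U V h q; apply: sig_eq. Qed.
Lemma rK1 U q : @rfwd U (rbwd q) = q.
Proof. by case: q => [[a b] E]; apply: sig_eq=> /=; congr pair; apply: sig_eq; case: a E; case: b. Qed.
Lemma rK2 U ab : @rbwd U (rfwd ab) = ab.
Proof. by apply: sig_eq; case: ab => [[a b] ?]. Qed.

Lemma rel_repr : representable (ConeP S X) -> representable (ConeP S Y) ->
  representable (ConeP (allS T) Y) -> representable (RelP S f).
Proof.
move=> R1 R2 R3.
have [R _] := PB_thm _ _ HC _ _ _ _ _ fcone_nat scone_nat R1 R3 R2.
apply: (representable_iso (eta := rbwd) (eps := rfwd)) => //.
- exact: rbwd_nat.
- exact: rK1.
- exact: rK2.
Qed.
End RelRepr.

Lemma seq_In (A : eqType) (s : seq A) (a : A) : a \in s -> List.In a s.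
Proof.
elim: s => [//|b s IH]; rewrite in_cons => /orP [/eqP ->|h]; [by left | by right; apply: IH].
Qed.

Lemma bd_repr n (X : sobj C) : representable (ConeP (T := DeltaS n) (boundary n) X).
Proof.
elim/ltn_ind: n => n IH.
pose l := List.flat_map (fun m => List.map (fun z : Delta m n => existT (sx (DeltaS n)) m z)
            (enum {: {g : {ffun 'I_m.+1 -> 'I_n.+1} | monob g}})) (List.seq 0 n).
apply: (@chain (DeltaS n) l (boundary n) _ _ (fun _ _ => False) _ _
          (fun P => representable (ConeP P X))).
- move=> m k t s; rewrite /boundary; apply: contra; exact: surjb_comp_l.
- move=> m z qz nd.
  have lt : m < n.
    apply: (@nondeg_dim (DeltaS n) m n z (did n)) => //; by rewrite /= dcomp_id_l.
  apply/List.in_flat_map; exists m; split.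
    apply/List.in_seq; lia.
  apply: List.in_map; apply: seq_In; exact: mem_enum.
- by [].
- by [].
- exact: empty_repr.
- move=> P m x HP HSP HPQ qx ndx npx fx RP.
  have lt : m < n by apply: (@nondeg_dim (DeltaS n) m n x (did n)) => //; rewrite /= dcomp_id_l.
  exact: (attach_cone_repr HC HP npx fx RP (IH m lt)).
Qed.
End Final.

Section Main.
Local Unset Implicit Arguments.
Variables (C : category) (cover : forall A B : ob C, hom A B -> Prop).
Hypothesis HC : descent_category cover.
Variables (T : sset) (S : forall n, sx T n -> Prop) (X Y : sobj C) (f : smorph X Y).
Local Set Implicit Arguments.

Section Restr.
Local Unset Implicit Arguments.
Variables (P : forall n, sx T n -> Prop) (H : subP S P).
Local Set Implicit Arguments.
Lemma restrSP_prop U (ab : pt (RelP P f) U) :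
  cone_compat (fun n x hs => (sval ab).1 n x (H n x hs)) /\ cone_compat (sval ab).2 /\
  rel_compat f (fun n x hs => (sval ab).1 n x (H n x hs)) (sval ab).2.
Proof.
case: ab => [[a b] [ca [cb rab]]] /=; split; [|split].
- by move=> m k t z hz hy; exact: ca.
- exact: cb.
- by move=> n x hs ht; exact: rab.
Qed.
Definition restrSP U (ab : pt (RelP P f) U) : pt (RelP S f) U :=
  exist _ ((fun n x hs => (sval ab).1 n x (H n x hs)), (sval ab).2) (restrSP_prop ab).
Lemma restrSP_nat : natural restrSP.
Proof. by move=> U V h ab; apply: sig_eq. Qed.
End Restr.

Lemma restrSP_id (H : subP S S) U (ab : pt (RelP S f) U) : restrSP H ab = ab.
Proof.
apply: sig_eq; case: ab => [[a b] ?] /=; congr pair; apply: cone_eq=> n x hs; exact: a_congr.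
Qed.

Hypothesis Hf : hypercover cover f.

Lemma RB n : representable (RelP (T := DeltaS n) (boundary n) f).
Proof. exact: (rel_repr HC f (bd_repr HC n X) (bd_repr HC n Y) (simplex_repr n Y)). Qed.

Lemma hc_cov n : covermap cover (@eta2 C n X Y f).
Proof.
case: (RB n) => N [e' R'].
have [h0 E0] := repr_ex (eta2 f (cid (sob X n))) R'.
apply: (covermap_one HC _ (@yo_repr C (sob X n)) R' E0); first exact: eta2_nat.
apply: (Hf (repr_MapRel R')).
- move=> m s hs; have := f_equal (fun w => (sval w).1 m s hs) E0.
  by rewrite /= /ybd ccomp_id_r.
- move=> m s ht; have := f_equal (fun w => (sval w).2 m s ht) E0.
  by rewrite /= /yall ccomp_id_r.
Qed.

Hypothesis HS : sub_sset S.
Hypothesis HT : finite_sset T.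
Hypothesis RS : representable (RelP S f).

Lemma main_chain : forall H : subP S (allS T),
  representable (RelP (allS T) f) /\ covermap cover (restrSP H).
Proof.
have [l Hl] := HT.
apply: (@chain T l (allS T) _ _ S HS _
   (fun P => forall H : subP S P, representable (RelP P f) /\ covermap cover (restrSP H))).
- by [].
- by move=> n z _; apply: Hl.
- by [].
- move=> H; split=> //.
  apply: (covermap_iso HC (eps := restrSP H) (restrSP_nat H)) => //.
  + by move=> U p; rewrite !restrSP_id.
  + by move=> U p; rewrite !restrSP_id.
- move=> P n x HP HSP HPQ qx ndx npx fx PhiP H'.
  have [RP cP] := PhiP HSP.
  have [R' c'] := attach_rel HC HP npx fx RP (RB n) (@hc_cov n).
  split=> //.
  apply: (covermap_ext (eta := fun U p => restrSP HSP (rrestr p))).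
    move=> U p; apply: sig_eq=> /=; congr pair; apply: cone_eq=> k z hs; rewrite /restr /=; exact: a_congr.
  exact: (covermap_comp HC (@rrestr_nat C T P n x X Y f) (restrSP_nat HSP) R' RP RS c' cP).
Qed.

Lemma gfun_prop U (a : pt (ConeP (allS T) X) U) :
  cone_compat (sval a) /\ cone_compat (fun n x (_ : allS T n x) => ccomp (smap f n) (sval a n x I)) /\
  rel_compat f (sval a) (fun n x (_ : allS T n x) => ccomp (smap f n) (sval a n x I)).
Proof.
case: a => [a ca] /=; split=> //; split.
  move=> m k t z hz hy /=; rewrite ccomp_assoc -smap_nat -ccomp_assoc.
  by rewrite (ca _ _ t z I I).
by move=> n x [] ht.
Qed.
Definition gfun U (a : pt (ConeP (allS T) X) U) : pt (RelP (allS T) f) U :=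
  exist _ (sval a, fun n x (_ : allS T n x) => ccomp (smap f n) (sval a n x I)) (gfun_prop a).
Definition ginv U (ab : pt (RelP (allS T) f) U) : pt (ConeP (allS T) X) U :=
  exist _ (sval ab).1 (proj1 (svalP ab)).
Lemma gfun_nat : natural gfun.
Proof.
move=> U V h a; apply: sig_eq=> /=; congr pair; apply: cone_eq=> n x hx /=.
by rewrite ccomp_assoc.
Qed.
Lemma gK1 U a : @ginv U (gfun a) = a.
Proof. by apply: sig_eq. Qed.
Lemma gK2 U ab : @gfun U (ginv ab) = ab.
Proof.
case: ab => [[a b] [ca [cb rab]]]; apply: sig_eq=> /=; congr pair.
apply: cone_eq=> n x hx; exact: rab.
Qed.
End Main.

Theorem lemma3p3 (C : category) (cover : forall A B : ob C, hom A B -> Prop)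
  (HC : descent_category cover)
  (T : sset) (HT : finite_sset T)
  (S : forall n, sx T n -> Prop) (HS : sub_sset S)
  (X Y : sobj C) (f : smorph X Y) (Hf : hypercover cover f)
  (M1 : ob C) (c : cone (allS T) X M1) (Hc : is_Map c)
  (M2 : ob C) (a : cone S X M2) (b : cone (allS T) Y M2) (Hab : is_MapRel f a b)
  (phi : hom M1 M2)
  (Hphi1 : forall n x (hs : S n x) (ht : allS T n x), ccomp (a n x hs) phi = c n x ht)
  (Hphi2 : forall n x (ht : allS T n x), ccomp (b n x ht) phi = ccomp (smap f n) (c n x ht)) :
  cover _ _ phi.
Proof.
have RS : representable (RelP S f) by exists M2; eexists; exact: (MapRel_repr Hab).
have RC : representable (ConeP (allS T) X) by exists M1; eexists; exact: (Map_repr Hc).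
pose H : subP S (allS T) := fun _ _ _ => I.
have [R cv] := main_chain HC Hf HS HT RS H.
have cg := covermap_iso HC (@gfun_nat C T X Y f) (@gK1 C T X Y f) (@gK2 C T X Y f) RC.
have cc := covermap_comp HC (@gfun_nat C T X Y f) (restrSP_nat H) RC R RS cg cv.
apply: (cc _ _ _ _ phi (Map_repr Hc) (MapRel_repr Hab)).
apply: sig_eq=> /=; congr pair; apply: cone_eq=> n x hx /=.
  exact: Hphi1.
by rewrite Hphi2; case: hx.
Qed.
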